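(* For every set $X\subseteq\omega$ there exists an infinite $X$-computable tournament $T$ on $\omega$ such that every infinite $T$-transitive subtournament $U$ satisfies $U\subseteq^{*}X$ or $U\subseteq^{*}\overline{X}$.
   Context: A tournament $T$ on a domain $D\subseteq\mathbb N$ is an irreflexive binary relation on $D$ such that for all distinct $x,y\in D$ exactly one of $T(x,y)$, $T(y,x)$ holds. A set $U\subseteq D$ is $T$-transitive (a transitive subtournament) if $T$ restricted to $U$ is transitive. $A\subseteq^* B$ means all but finitely many elements of $A$ lie in $B$. *)

(* Defs.v *)
From Stdlib Require Import Arith List.
Import ListNotations.

(* Codes of partial recursive functions with one oracle (untyped arities). *)
Inductive code : Type :=
| Zero : code
| Succ : code
| Proj : nat -> code
| Comp : code -> list code -> code
| Prec : code -> code -> code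
| Mu   : code -> code
| Orac : code.

Inductive eval (X : nat -> Prop) : code -> list nat -> nat -> Prop :=
| eZero v : eval X Zero v 0
| eSucc x v : eval X Succ (x :: v) (S x)
| eProj i v : i < length v -> eval X (Proj i) v (nth i v 0)
| eComp f gs v ws y : evals X gs v ws -> eval X f ws y -> eval X (Comp f gs) v y
| ePrec0 f g v y : eval X f v y -> eval X (Prec f g) (0 :: v) y
| ePrecS f g n v r y :
    eval X (Prec f g) (n :: v) r -> eval X g (n :: r :: v) y ->
    eval X (Prec f g) (S n :: v) y
| eMu f v n :
    eval X f (n :: v) 0 ->
    (forall m, m < n -> exists k, eval X f (m :: v) (S k)) ->
    eval X (Mu f) v n
| eOrac1 x v : X x -> eval X Orac (x :: v) 1
| eOrac0 x v : ~ X x -> eval X Orac (x :: v) 0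
with evals (X : nat -> Prop) : list code -> list nat -> list nat -> Prop :=
| esNil v : evals X nil v nil
| esCons g gs v y ys : eval X g v y -> evals X gs v ys -> evals X (g :: gs) v (y :: ys).

Definition X_computable_rel (X : nat -> Prop) (R : nat -> nat -> Prop) : Prop :=
  exists c : code, forall x y : nat,
    (R x y -> eval X c [x; y] 1) /\ (~ R x y -> eval X c [x; y] 0).

Definition tournament (T : nat -> nat -> Prop) : Prop :=
  (forall x, ~ T x x) /\
  (forall x y, x <> y -> (T x y \/ T y x) /\ ~ (T x y /\ T y x)).

Definition T_transitive (T : nat -> nat -> Prop) (U : nat -> Prop) : Prop :=
  forall x y z, U x -> U y -> U z -> T x y -> T y z -> T x z.

Definition infinite_set (U : nat -> Prop) : Prop :=
  forall n, exists m, n <= m /\ U m.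

Definition almost_subset (A B : nat -> Prop) : Prop :=
  exists N, forall x, N <= x -> A x -> B x.

(* Main.v *)
Require Import Defs.
From Stdlib Require Import Arith List Lia Classical.
Import ListNotations.

Definition PRED : code := Prec Zero (Proj 0).
Definition SUB : code := Prec (Proj 0) (Comp PRED [Proj 1]).
Definition ONE : code := Comp Succ [Zero].
Definition SG : code := Prec Zero ONE.
Definition COND : code := Prec (Proj 1) (Proj 2).

Definition sg (n : nat) := match n with 0 => 0 | S _ => 1 end.
Definition cond (c u w : nat) := match c with 0 => w | S _ => u end.

Section S.
Variable X : nat -> Prop.

Lemma one_spec v : eval X ONE v 1.
Proof. eapply eComp. repeat constructor. constructor. Qed.


Lemma pred_spec n : eval X PRED [n] (n - 1).
Proof.
  induction n.
  - constructor. constructor.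
  - eapply ePrecS. exact IHn. replace (S n - 1) with n by lia.
    apply (eProj X 0 [n; n - 1]); simpl; lia.
Qed.

Lemma sub_spec a b : eval X SUB [a; b] (b - a).
Proof.
  induction a.
  - constructor. replace (b - 0) with b by lia. apply (eProj X 0 [b]); simpl; lia.
  - eapply ePrecS. exact IHa.
    eapply eComp. constructor. apply (eProj X 1 [a; b - a; b]); simpl; lia. constructor.
    replace (b - S a) with (b - a - 1) by lia. apply pred_spec.
Qed.

Lemma sg_spec n : eval X SG [n] (sg n).
Proof.
  induction n.
  - constructor. constructor.
  - eapply ePrecS. exact IHn. apply one_spec.
Qed.

Lemma cond_spec c u w : eval X COND [c; u; w] (cond c u w).
Proof.
  induction c.
  - constructor. apply (eProj X 1 [u; w]); simpl; lia.
  - eapply ePrecS. exact IHc. change (cond (S c) u w) with (nth 2 [c; cond c u w; u; w] 0).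
    apply eProj; simpl; lia.
Qed.

Lemma orac_ex x v : exists a, eval X Orac (x :: v) a /\ ((X x /\ a = 1) \/ (~ X x /\ a = 0)).
Proof.
  destruct (classic (X x)).
  - exists 1. split. constructor; auto. auto.
  - exists 0. split. constructor; auto. auto.
Qed.

Definition A := Comp Orac [Proj 0].
Definition B := Comp Orac [Proj 1].
Definition LT := Comp SG [Comp SUB [Proj 0; Proj 1]].
Definition GT := Comp SG [Comp SUB [Proj 1; Proj 0]].
Definition NB := Comp SUB [B; ONE].
Definition EQ := Comp COND [A; B; NB].
Definition NEQ := Comp COND [A; NB; B].
Definition MAIN := Comp COND [LT; EQ; Comp COND [GT; NEQ; Zero]].

Definition F x y a b :=
  cond (sg (y - x)) (cond a b (1 - b)) (cond (sg (x - y)) (cond a (1 - b) b) 0).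

Lemma main_spec x y a b :
  eval X Orac [x] a -> eval X Orac [y] b -> eval X MAIN [x; y] (F x y a b).
Proof.
  intros Ha Hb.
  assert (HA : eval X A [x; y] a).
  { eapply eComp. constructor. apply (eProj X 0 [x;y]); simpl; lia. constructor. exact Ha. }
  assert (HB : eval X B [x; y] b).
  { eapply eComp. constructor. apply (eProj X 1 [x;y]); simpl; lia. constructor. exact Hb. }
  assert (HNB : eval X NB [x; y] (1 - b)).
  { eapply eComp. constructor. exact HB. constructor. apply one_spec. constructor. apply sub_spec. }
  unfold F. eapply eComp. 2: apply cond_spec.
  constructor.
  { eapply eComp. constructor. eapply eComp. constructor.
    apply (eProj X 0 [x;y]); simpl; lia. constructor.
    apply (eProj X 1 [x;y]); simpl; lia. constructor. apply sub_spec. constructor. apply sg_spec. }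
  constructor.
  { eapply eComp. constructor. exact HA. constructor. exact HB. constructor. exact HNB. constructor.
    apply cond_spec. }
  constructor. 2: constructor.
  eapply eComp. 2: apply cond_spec.
  constructor.
  { eapply eComp. constructor. eapply eComp. constructor.
    apply (eProj X 1 [x;y]); simpl; lia. constructor.
    apply (eProj X 0 [x;y]); simpl; lia. constructor. apply sub_spec. constructor. apply sg_spec. }
  constructor.
  { eapply eComp. constructor. exact HA. constructor. exact HNB. constructor. exact HB. constructor.
    apply cond_spec. }
  constructor. constructor. constructor.
Qed.

End S.

Definition Tr (X : nat -> Prop) (x y : nat) : Prop :=
  x <> y /\ ((x < y /\ (X x <-> X y)) \/ (y < x /\ ~ (X x <-> X y))).

Lemma not_as (U P : nat -> Prop) : ~ almost_subset U P -> forall N, exists x, N <= x /\ U x /\ ~ P x.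
Proof.
  intros H N. apply NNPP. intro H'. apply H. exists N. intros x Hx Ux.
  apply NNPP. intro. apply H'. eauto.
Qed.

Theorem mainTheorem10 :
  forall X : nat -> Prop,
    exists T : nat -> nat -> Prop,
      tournament T /\ X_computable_rel X T /\
      (forall U : nat -> Prop,
         infinite_set U -> T_transitive T U ->
         almost_subset U X \/ almost_subset U (fun x => ~ X x)).
Proof.
  intro X. exists (Tr X). split; [|split].
  - split.
    + intros x [H _]. auto.
    + intros x y Hxy. unfold Tr.
      destruct (classic (X x <-> X y)) as [E|E];
      (destruct (lt_eq_lt_dec x y) as [[L|L]|L]; [|lia|]); (split;
      [ first [ left; split; [lia| left; split; [lia|tauto]]
              | left; split; [lia| right; split; [lia|tauto]]
              | right; split; [lia| left; split; [lia|tauto]]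
              | right; split; [lia| right; split; [lia|tauto]] ]
      | intros [[_ [[? ?]|[? ?]]] [_ [[? ?]|[? ?]]]]; try lia; tauto ]).
  - exists (MAIN). intros x y.
    destruct (orac_ex X x []) as [a [Ha Pa]].
    destruct (orac_ex X y []) as [b [Hb Pb]].
    pose proof (main_spec X x y a b Ha Hb) as M.
    assert (Hv : (Tr X x y -> F x y a b = 1) /\ (~ Tr X x y -> F x y a b = 0)).
    { unfold Tr, F.
      destruct (lt_eq_lt_dec x y) as [[L|L]|L].
      - replace (y - x) with (S (y - x - 1)) by lia. replace (x - y) with 0 by lia. simpl.
        destruct Pa as [[? ->]|[? ->]]; destruct Pb as [[? ->]|[? ->]]; simpl;
        split; intro HH; first [reflexivity | exfalso; destruct HH as [_ [[? ?]|[? ?]]]; [tauto|lia] | exfalso; destruct HH as [_ [[? ?]|[? ?]]]; [lia|tauto] | exfalso; apply HH; split; [lia| first [left; split; [lia|tauto] | right; split;[lia|tauto]]]].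
      - subst. replace (y - y) with 0 by lia. simpl. split; intros; try tauto.
      - replace (x - y) with (S (x - y - 1)) by lia. replace (y - x) with 0 by lia. simpl.
        destruct Pa as [[? ->]|[? ->]]; destruct Pb as [[? ->]|[? ->]]; simpl;
        split; intro HH; first [reflexivity | exfalso; destruct HH as [_ [[? ?]|[? ?]]]; [tauto|lia] | exfalso; destruct HH as [_ [[? ?]|[? ?]]]; [lia|tauto] | exfalso; apply HH; split; [lia| first [left; split; [lia|tauto] | right; split;[lia|tauto]]]]. }
    destruct Hv as [H1 H0]. split; intro H; [rewrite <- (H1 H) | rewrite <- (H0 H)]; exact M.
  - intros U _ HT. apply NNPP. intro H.
    apply not_or_and in H. destruct H as [H1 H2].
    destruct (not_as _ _ H2 0) as [a [_ [Ua Xa]]]. apply NNPP in Xa.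
    destruct (not_as _ _ H1 (S a)) as [b [Lb [Ub Xb]]].
    destruct (not_as _ _ H2 (S b)) as [c [Lc [Uc Xc]]]. apply NNPP in Xc.
    assert (Tcb : Tr X c b) by (split; [lia|right; split; [lia|tauto]]).
    assert (Tba : Tr X b a) by (split; [lia|right; split; [lia|tauto]]).
    destruct (HT c b a Uc Ub Ua Tcb Tba) as [_ [[? _]|[_ ?]]]; [lia|tauto].
Qed.
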